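(* At every point of the set $\mathcal{RS}\cap\{1-Z_1\ge0\}\cap\{F_2=0\}\cap\{Z_2-Z_3\ge0\}\cap\{X_1\ge0\}$ (with $Z_1>0$, so that $F_2$ is defined) one has $\langle\nabla F_2,V\rangle\ge0$.
   Context: Fix an integer $m\ge1$, $n=4m+3$ and $\epsilon\in\{0,1\}$. On $\mathbb R^8$ with coordinates $(X_1,X_2,X_3,Z_1,Z_2,Z_3,Z_4,W)$ set $G=X_1^2+2X_2^2+4mX_3^2$, $H=X_1+2X_2+4mX_3$, $R_1=2Z_1Z_2+4mZ_1Z_3$, $R_2=4Z_2-2Z_1Z_2+4mZ_3$, $R_3=(4m+8)Z_4-2Z_1Z_3-4Z_3$, $R_s=R_1+2R_2+4mR_3$, $Q=G+R_s+(n-1)\frac\epsilon2W-1$. $V$ is the vector field with components $V_{X_i}=X_i(G-\frac\epsilon2W-1)+R_i+\frac\epsilon2W$ ($i=1,2,3$), $V_{Z_1}=2Z_1(X_1-X_2)$, $V_{Z_2}=2Z_2(G-\frac\epsilon2W-X_2)$, $V_{Z_3}=2Z_3(G-\frac\epsilon2W+X_2-2X_3)$, $V_{Z_4}=2Z_4(G-\frac\epsilon2W-X_3)$, $V_W=2W(G-\frac\epsilon2W)$. $\mathcal{RS}=\{Q\le0\}\cap\{H\le1\}\cap\{W\ge0\}\cap\{Z_1,Z_2,Z_3,Z_4\ge0\}\cap\{Z_4^2=Z_2Z_3\}$. For a constant $l$ and $Z_1>0$, $F_l=X_2-X_1+l\left(\sqrt{Z_2/Z_1}-\sqrt{Z_1Z_2}\right)$.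 *)

(* Defs.v *)
From Stdlib Require Import Reals.
From Coquelicot Require Import Coquelicot.
Open Scope R_scope.

(* Parameters: m : nat (m >= 1), n = 4m+3, eps in {0,1} (as a real).
   Coordinates (X1,X2,X3,Z1,Z2,Z3,Z4,W). *)

Definition nR (m : nat) : R := 4 * INR m + 3.

Definition Gf (m : nat) (X1 X2 X3 : R) : R :=
  X1^2 + 2 * X2^2 + 4 * INR m * X3^2.

Definition Hf (m : nat) (X1 X2 X3 : R) : R :=
  X1 + 2 * X2 + 4 * INR m * X3.

Definition R1f (m : nat) (Z1 Z2 Z3 : R) : R :=
  2 * Z1 * Z2 + 4 * INR m * Z1 * Z3.

Definition R2f (m : nat) (Z1 Z2 Z3 : R) : R :=
  4 * Z2 - 2 * Z1 * Z2 + 4 * INR m * Z3.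

Definition R3f (m : nat) (Z1 Z3 Z4 : R) : R :=
  (4 * INR m + 8) * Z4 - 2 * Z1 * Z3 - 4 * Z3.

Definition Rsf (m : nat) (Z1 Z2 Z3 Z4 : R) : R :=
  R1f m Z1 Z2 Z3 + 2 * R2f m Z1 Z2 Z3 + 4 * INR m * R3f m Z1 Z3 Z4.

Definition Qf (m : nat) (eps : R) (X1 X2 X3 Z1 Z2 Z3 Z4 W : R) : R :=
  Gf m X1 X2 X3 + Rsf m Z1 Z2 Z3 Z4 + (nR m - 1) * (eps / 2) * W - 1.

Definition VX1 m eps (X1 X2 X3 Z1 Z2 Z3 Z4 W : R) : R :=
  X1 * (Gf m X1 X2 X3 - eps / 2 * W - 1) + R1f m Z1 Z2 Z3 + eps / 2 * W.
Definition VX2 m eps (X1 X2 X3 Z1 Z2 Z3 Z4 W : R) : R :=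
  X2 * (Gf m X1 X2 X3 - eps / 2 * W - 1) + R2f m Z1 Z2 Z3 + eps / 2 * W.
Definition VX3 m eps (X1 X2 X3 Z1 Z2 Z3 Z4 W : R) : R :=
  X3 * (Gf m X1 X2 X3 - eps / 2 * W - 1) + R3f m Z1 Z3 Z4 + eps / 2 * W.
Definition VZ1 (m : nat) (eps : R) (X1 X2 X3 Z1 Z2 Z3 Z4 W : R) : R :=
  2 * Z1 * (X1 - X2).
Definition VZ2 m eps (X1 X2 X3 Z1 Z2 Z3 Z4 W : R) : R :=
  2 * Z2 * (Gf m X1 X2 X3 - eps / 2 * W - X2).
Definition VZ3 m eps (X1 X2 X3 Z1 Z2 Z3 Z4 W : R) : R :=
  2 * Z3 * (Gf m X1 X2 X3 - eps / 2 * W + X2 - 2 * X3).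
Definition VZ4 m eps (X1 X2 X3 Z1 Z2 Z3 Z4 W : R) : R :=
  2 * Z4 * (Gf m X1 X2 X3 - eps / 2 * W - X3).
Definition VW m eps (X1 X2 X3 Z1 Z2 Z3 Z4 W : R) : R :=
  2 * W * (Gf m X1 X2 X3 - eps / 2 * W).

Definition inRS (m : nat) (eps : R) (X1 X2 X3 Z1 Z2 Z3 Z4 W : R) : Prop :=
  Qf m eps X1 X2 X3 Z1 Z2 Z3 Z4 W <= 0 /\
  Hf m X1 X2 X3 <= 1 /\
  0 <= W /\
  0 <= Z1 /\ 0 <= Z2 /\ 0 <= Z3 /\ 0 <= Z4 /\
  Z4^2 = Z2 * Z3.

(* F_l as a function of all 8 coordinates (it only depends on X1,X2,Z1,Z2);
   meaningful for Z1 > 0. *)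
Definition Ff (l : R) (X1 X2 X3 Z1 Z2 Z3 Z4 W : R) : R :=
  X2 - X1 + l * (sqrt (Z2 / Z1) - sqrt (Z1 * Z2)).

(* <grad F, V> at a point, realised as the derivative at t = 0 of
   t |-> F(p + t V(p)). *)
Definition dirF (m : nat) (eps l : R) (X1 X2 X3 Z1 Z2 Z3 Z4 W : R) : R -> R :=
  fun t =>
    Ff l (X1 + t * VX1 m eps X1 X2 X3 Z1 Z2 Z3 Z4 W)
         (X2 + t * VX2 m eps X1 X2 X3 Z1 Z2 Z3 Z4 W)
         (X3 + t * VX3 m eps X1 X2 X3 Z1 Z2 Z3 Z4 W)
         (Z1 + t * VZ1 m eps X1 X2 X3 Z1 Z2 Z3 Z4 W)
         (Z2 + t * VZ2 m eps X1 X2 X3 Z1 Z2 Z3 Z4 W)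
         (Z3 + t * VZ3 m eps X1 X2 X3 Z1 Z2 Z3 Z4 W)
         (Z4 + t * VZ4 m eps X1 X2 X3 Z1 Z2 Z3 Z4 W)
         (W + t * VW m eps X1 X2 X3 Z1 Z2 Z3 Z4 W).

(* Main.v *)
Require Import Defs.
From Stdlib Require Import Reals Lra Psatz.
From Coquelicot Require Import Coquelicot.
Open Scope R_scope.

Lemma key_bound (m : nat) (eps X1 X2 X3 Z1 Z2 Z3 Z4 W : R) :
  (1 <= m)%nat -> (eps = 0 \/ eps = 1) ->
  inRS m eps X1 X2 X3 Z1 Z2 Z3 Z4 W -> Z1 <= 1 -> 0 <= Z2 - Z3 ->
  X1^2 + 2*X2^2 + (8 - 2*Z1)*Z2 <= 1.
Proof.
  intros Hm Heps [HQ [HH [HW [HZ1 [HZ2 [HZ3 [HZ4 HZ]]]]]]] H1 H23.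
  assert (Hm' : 1 <= INR m) by (apply (le_INR 1); exact Hm).
  assert (HZ43 : Z3 <= Z4) by nra.
  unfold Qf, Gf, Rsf, R1f, R2f, R3f, nR in HQ.
  assert (He : 0 <= eps) by lra.
  assert (0 <= (4 * INR m + 3 - 1) * (eps / 2) * W).
  { apply Rmult_le_pos; [apply Rmult_le_pos|]; lra. }
  assert (0 <= INR m * X3^2) by nra.
  assert (0 <= Z3 * INR m * (16 * INR m + 32 - 4*Z1 - 8)) by
    (apply Rmult_le_pos; [apply Rmult_le_pos|]; lra).
  assert (INR m * (4*INR m + 8) * Z3 <= INR m * (4*INR m + 8) * Z4).
  { apply Rmult_le_compat_l; [nra|lra]. }
  nra.
Qed.

Theorem proposition4p1 :
  forall (m : nat), (1 <= m)%nat ->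
  forall (eps : R), (eps = 0 \/ eps = 1) ->
  forall X1 X2 X3 Z1 Z2 Z3 Z4 W : R,
    inRS m eps X1 X2 X3 Z1 Z2 Z3 Z4 W ->
    0 <= 1 - Z1 ->
    0 < Z1 ->
    Ff 2 X1 X2 X3 Z1 Z2 Z3 Z4 W = 0 ->
    0 <= Z2 - Z3 ->
    0 <= X1 ->
    exists d : R,
      is_derive (dirF m eps 2 X1 X2 X3 Z1 Z2 Z3 Z4 W) 0 d /\ 0 <= d.
Proof.
  intros m Hm eps Heps X1 X2 X3 Z1 Z2 Z3 Z4 W HRS Hc HZ1 HF H23 HX1.
  pose proof (key_bound m eps X1 X2 X3 Z1 Z2 Z3 Z4 W Hm Heps HRS ltac:(lra) H23) as KB.
  destruct HRS as [HQ [HH [HW [_ [HZ2 [HZ3 [HZ4 HZ]]]]]]].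
  assert (Hm' : 1 <= INR m) by (apply (le_INR 1); exact Hm).
  unfold Ff, Rdiv in HF.
  destruct (Rle_lt_or_eq_dec 0 Z2 HZ2) as [HZ2p | HZ20].
  - eexists. split.
    + unfold dirF, Ff. auto_derive.
      * repeat split; try (rewrite !Rmult_0_l, !Rplus_0_r); try lra.
        apply Rdiv_lt_0_compat; lra. nra.
      * reflexivity.
    + rewrite !Rmult_0_l, !Rplus_0_r, ?Rmult_1_l, ?Rmult_1_r.
      set (s := sqrt (Z2 * / Z1)) in *.
      assert (Hs0 : 0 < s) by (apply sqrt_lt_R0; apply Rdiv_lt_0_compat; lra).
      assert (Hs2 : s * s = Z2 * / Z1) by (apply sqrt_sqrt; apply Rlt_le, Rdiv_lt_0_compat; lra).
      assert (HZ2e : Z2 = Z1 * s^2) by (simpl; rewrite Rmult_1_r, Hs2; field; lra).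
      assert (Hr : sqrt (Z1 * Z2) = Z1 * s).
      { rewrite HZ2e. replace (Z1 * (Z1 * s^2)) with ((Z1*s)^2) by ring.
        apply sqrt_pow2. nra. }
      rewrite Hr in HF |- *. clearbody s. subst Z2.
      unfold VX1, VX2, VZ1, VZ2, Gf, R1f, R2f.
      assert (HX : X1 = X2 + 2*s*(1-Z1)) by lra.
      assert (Hy : X2 + 2*s <= 1).
      { rewrite HX in KB.
        assert (0 <= 2*((X2+2*s) - (Z1+2)*s)^2) by (apply Rmult_le_pos; [lra|apply pow2_ge_0]).
        assert ((X2+2*s)^2 <= 1) by nra. nra. }
      assert (Heq : forall A B, (A - B) = 0 -> A = B) by (intros; lra).
      match goal with |- 0 <= ?e => replace e with
        ((1-Z1)*(2*s*(1 - X2 - 2*s) + 4*INR m*Z3)) end.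
      * apply Rmult_le_pos; [lra|]. nra.
      * rewrite HX. field. lra.
  - subst Z2.
    assert (HZ30 : Z3 = 0) by lra. subst Z3.
    rewrite Rmult_0_l, Rmult_0_r, sqrt_0 in HF.
    exists 0. split; [|lra].
    assert (Hext : forall t : R, X2 - X1 + t * 0 = dirF m eps 2 X1 X2 X3 Z1 0 0 Z4 W t).
    { intro t. unfold dirF, Ff, VZ2, VX1, VX2, R1f, R2f.
      replace (0 + t * (2 * 0 * (Gf m X1 X2 X3 - eps / 2 * W - X2))) with 0 by ring.
      replace X2 with X1 by lra.
      rewrite !Rmult_0_r, Rdiv_0_l, !sqrt_0. ring. }
    apply (is_derive_ext (fun t => X2 - X1 + t * 0)); [exact Hext|].
    auto_derive; [exact I| ring].
Qed.
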